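(* Let $f: (\mathbb{R}^{+})^n \to (\mathbb{R}^{+})^n$ be homogeneous and monotone such that $\mathcal{G}(f)$ is strongly connected. Then for every $\lambda \in \mathbb{R}^{+}$ the super-eigenspace $S^\lambda(f) = \{x \in (\mathbb{R}^{+})^n : f(x) \le \lambda x\}$ is bounded in the Hilbert projective metric.
   Context: Homogeneous: $f(\lambda x) = \lambda f(x)$ for all $\lambda > 0$; monotone: $x \le y$ componentwise implies $f(x) \le f(y)$. For $u > 0$ and $J \subseteq \{1,\dots,n\}$, $u_J$ is the vector with entries $u$ on $J$ and $1$ off $J$. $\mathcal{G}(f)$ is the directed graph on $\{1,\dots,n\}$ with an edge $i \to j$ iff $\lim_{u\to\infty} f_i(u_{\{j\}}) = \infty$. Hilbert projective metric: $d_H(y,z) = \max_i \log(y_i/z_i) - \min_i \log(y_i/z_i)$; a set $A$ is bounded if $\sup_{y,z\in A} d_H(y,z) < \infty$ (the empty set is bounded). *)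

(* Defs.v *)
From HB Require Import structures.
From mathcomp Require Import all_boot all_order all_algebra.
From mathcomp Require Import all_classical all_reals all_analysis.
From Stdlib Require Import Relations.
Set Implicit Arguments. Unset Strict Implicit. Unset Printing Implicit Defensive.
Import Order.TTheory GRing.Theory Num.Theory.
Import numFieldNormedType.Exports.
Local Open Scope classical_set_scope.
Local Open Scope ring_scope.

Section Defs.
Context {R : realType} {n : nat}.
Notation vec := ('I_n -> R).

Definition posvec (x : vec) : Prop := forall i, 0 < x i.

Definition vle (x y : vec) : Prop := forall i, x i <= y i.

Definition maps_pos (f : vec -> vec) : Prop :=
  forall x, posvec x -> posvec (f x).

Definition homogeneous_pos (f : vec -> vec) : Prop :=
  forall (l : R) x, 0 < l -> posvec x -> f (fun i => l * x i) = (fun i => l * f x i).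

Definition monotone_pos (f : vec -> vec) : Prop :=
  forall x y, posvec x -> posvec y -> vle x y -> vle (f x) (f y).

Definition uvec (u : R) (J : {set 'I_n}) : vec :=
  fun i => if i \in J then u else 1.

Definition Gedge (f : vec -> vec) (i j : 'I_n) : Prop :=
  (fun u : R => f (uvec u [set j]) i) @ +oo --> +oo.

Definition strongly_connected (f : vec -> vec) : Prop :=
  forall i j : 'I_n, clos_refl_trans 'I_n (Gedge f) i j.

(* Hilbert projective metric:
   max_i log(y_i/z_i) - min_i log(y_i/z_i)
   = max_{i,j} (log(y_i/z_i) - log(y_j/z_j))   (which is >= 0; 0 when n = 0) *)
Definition dH (y z : vec) : R :=
  \big[Num.max/0]_(i < n) \big[Num.max/0]_(j < n)
     (ln (y i / z i) - ln (y j / z j)).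

Definition dH_bounded (A : set vec) : Prop :=
  exists C : R, forall y z, A y -> A z -> dH y z <= C.

Definition super_eigenspace (f : vec -> vec) (l : R) : set vec :=
  [set x | posvec x /\ vle (f x) (fun i => l * x i)].
End Defs.

(* Main.v *)
Require Import Defs.
From mathcomp Require Import all_boot all_order all_algebra.
From mathcomp Require Import all_classical all_reals all_analysis.
From mathcomp Require Import ring lra.
From Stdlib Require Import Relations.
Import Order.TTheory GRing.Theory Num.Theory.
Local Open Scope ring_scope.

Section Proof.
Variables (R : realType) (n : nat) (f : ('I_n -> R) -> ('I_n -> R)).
Hypotheses (fpos : maps_pos f) (fhom : homogeneous_pos f) (fmon : monotone_pos f).
Variables (l : R) (lpos : 0 < l).

Let S := super_eigenspace f l.

Definition Qrel (i j : 'I_n) : Prop := forall B : R, exists B' : R,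
  forall x, S x -> forall k, (forall t, x k <= x t) -> x i <= B * x k -> x j <= B' * x k.

Lemma argmin_ex (x : 'I_n -> R) (i0 : 'I_n) : exists k, forall t, x k <= x t.
Proof.
case: (arg_minP x (isT : predT i0)) => k _ H; exists k => t; exact: H.
Qed.

Lemma Qedge i j : Gedge f i j -> Qrel i j.
Proof.
move=> E B.
have := proj1 (cvgryPgt _) E (l * B).
case=> M [Mreal HM].
exists (Num.max M 1) => x [xp xS] k kmin xi.
rewrite leNgt; apply/negP => H.
have xk0 : 0 < x k by exact: xp.
set u := x j / x k.
have uM : Num.max M 1 < u by rewrite /u ltr_pdivlMr.
have u1 : 1 < u by apply: le_lt_trans uM; rewrite le_max lexx orbT.
have u0 : 0 < u by apply: lt_trans u1.
have Mu : M < u by apply: le_lt_trans uM; rewrite le_max lexx.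
have upos : posvec (uvec u [set j]).
  by move=> t; rewrite /uvec; case: (t \in _).
have vle_x : vle (fun t => x k * uvec u [set j] t) x.
  move=> t; rewrite /uvec; case: ifP => [/set1P -> | _].
    by rewrite /u mulrC divfK // gt_eqF.
  by rewrite mulr1.
have vpos : posvec (fun t => x k * uvec u [set j] t).
  by move=> t; apply: mulr_gt0.
have := @fmon _ _ vpos xp vle_x i.

rewrite (@fhom _ _ xk0 upos).
move=> h1.
have h2 := xS i.
have h3 : x k * f (uvec u [set j]) i <= x k * (l * B).
  apply: (le_trans h1); apply: (le_trans h2).
  by rewrite mulrCA ler_pM2l // mulrC.
rewrite ler_pM2l // in h3.
have := HM u Mu.
by rewrite ltNge h3.
Qed.

Lemma Qrefl i : Qrel i i.
Proof. by move=> B; exists B => x _ k _. Qed.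

Lemma Qtrans i j k : Qrel i j -> Qrel j k -> Qrel i k.
Proof.
move=> H1 H2 B; have [B1 HB1] := H1 B; have [B2 HB2] := H2 B1.
exists B2 => x Sx m mm xi; apply: HB2 => //; exact: HB1.
Qed.

Lemma Qclos i j : clos_refl_trans 'I_n (Gedge f) i j -> Qrel i j.
Proof.
elim=> [a b E| a | a b c _ H1 _ H2].
- exact: Qedge.
- exact: Qrefl.
- exact: Qtrans H1 H2.
Qed.

Lemma main_bound : strongly_connected f -> exists M : R, (1 <= M) /\ (forall x, S x -> forall k, (forall t, x k <= x t) -> forall j, x j <= M * x k).
Proof.
move=> sc.
have H : forall p : 'I_n * 'I_n, exists B : R, forall x, S x ->
   (forall t, x p.1 <= x t) -> x p.2 <= B * x p.1.
  move=> [k j]; have [B HB] := @Qclos k j (sc k j) 1.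
  by exists B => x Sx km; apply: HB => //; rewrite mul1r.
have [g Hg] := choice H.
exists (\big[Num.max/1]_p g p); split.
  exact: bigmax_ge_id.
move=> x Sx k km j.
apply: (le_trans (Hg (k, j) x Sx km)).
rewrite ler_pM2r; last by case: Sx => xp _; exact: xp.
exact: (le_bigmax _ _ (k, j)).
Qed.
End Proof.

Theorem theorem4 (R : realType) (n : nat) (f : ('I_n -> R) -> ('I_n -> R)) :
  maps_pos f -> homogeneous_pos f -> monotone_pos f -> strongly_connected f ->
  forall l : R, 0 < l -> dH_bounded (super_eigenspace f l).
Proof.
move=> fpos fhom fmon sc l lpos.
have [M [M1 HM]] := @main_bound R n f fhom fmon l lpos sc.
have M0 : 0 < M by apply: lt_le_trans M1.
exists (ln (M * M)) => y z Sy Sz.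
have yp : posvec y by case: Sy.
have zp : posvec z by case: Sz.
rewrite /dH; apply: bigmax_le => [|i _]; first by apply: ln_ge0; rewrite mulr_ege1.
apply: bigmax_le => [|j _]; first by apply: ln_ge0; rewrite mulr_ege1.
have [ky Hky] := @argmin_ex R n y i.
have [kz Hkz] := @argmin_ex R n z i.
have yij : y i <= M * y j.
  apply: (le_trans (HM y Sy ky Hky i)); rewrite ler_pM2l //.
have zji : z j <= M * z i.
  apply: (le_trans (HM z Sz kz Hkz j)); rewrite ler_pM2l //.
have yi := yp i; have yj := yp j; have zi := zp i; have zj := zp j.
rewrite -ln_div ?posrE ?divr_gt0 //.
rewrite ler_ln ?posrE ?divr_gt0 ?mulr_gt0 //.
have -> : y i / z i / (y j / z j) = (y i / y j) * (z j / z i).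
  by field; rewrite ?gt_eqF.
apply: ler_pM.
- by apply: divr_ge0; apply: ltW.
- by apply: divr_ge0; apply: ltW.
- by rewrite ler_pdivrMr // mulrC.
- by rewrite ler_pdivrMr // mulrC.
Qed.
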